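(* Let $n\ge 2$, fix $\beta\in\partial\mathbb{D}$ and $\{\alpha_j\}_{j=0}^{n-2}\in\mathbb{D}^{n-1}$. Let $C_n(z)=C_n(z;\{\alpha_j\}_{j=0}^{n-2},\beta)$ and $S_n(z)=S_n(z;\{\alpha_j\}_{j=0}^{n-2},\beta)$, and let $C_{n-1}(z)=C_{n-1}(z;\{\alpha_{j+1}\}_{j=0}^{n-3},\beta)$ and $S_{n-1}(z)=S_{n-1}(z;\{\alpha_{j+1}\}_{j=0}^{n-3},\beta)$ be the corresponding functions with $\alpha_0$ removed. Then \[ C_n(z)=z\bigl(C_{n-1}(z)-\alpha_0S_{n-1}(z)\bigr),\qquad S_n(z)=-\bar\alpha_0C_{n-1}(z)+S_{n-1}(z). \]
   Context: For Verblunsky coefficients $\alpha_0,\alpha_1,\dots\in\mathbb{D}$ the monic orthogonal polynomials on the unit circle satisfy $\Phi_0=1$, $\Phi_{k+1}(z)=z\Phi_k(z)-\bar\alpha_k\Phi_k^*(z)$ with $\Phi_k^*(z)=z^k\overline{\Phi_k(1/\bar z)}$; the second kind polynomials $\Psi_k$ satisfy the same recursion with each $\alpha_j$ replaced by $-\alpha_j$. For $m\ge1$ and $\beta\in\partial\mathbb{D}$, $P_m(z;\{\alpha_j\}_{j=0}^{m-2},\beta)=z\Phi_{m-1}(z)-\bar\beta\Phi_{m-1}^*(z)$ and $Q_m(z;\{\alpha_j\}_{j=0}^{m-2},\beta)=z\Psi_{m-1}(z)+\bar\beta\Psi_{m-1}^*(z)$ (with $\Phi_{m-1},\Psi_{m-1}$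 built from $\alpha_0,\dots,\alpha_{m-2}$), and $C_m=\tfrac12(P_m+Q_m)$, $S_m=\tfrac12(P_m-Q_m)$. *)

(* Defs.v *)
From HB Require Import structures.
From mathcomp Require Import all_boot all_order all_algebra.
From mathcomp Require Import complex.
Set Implicit Arguments. Unset Strict Implicit. Unset Printing Implicit Defensive.
Import Order.TTheory GRing.Theory Num.Theory.
Local Open Scope ring_scope.

Section OPUC.
Variable C : numClosedFieldType.

(* reversed polynomial of degree k: p^*(z) = z^k conj(p(1/conj z)),
   i.e. the polynomial whose i-th coefficient is conj(p_{k-i}). *)
Definition rev_star (k : nat) (p : {poly C}) : {poly C} :=
  \poly_(i < k.+1) (p`_(k - i))^*.

Fixpoint Phi (alpha : nat -> C) (k : nat) : {poly C} :=
  match k with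
  | 0 => 1
  | k'.+1 => 'X * Phi alpha k' - (alpha k')^* *: rev_star k' (Phi alpha k')
  end.

Definition Psi (alpha : nat -> C) (k : nat) : {poly C} :=
  Phi (fun j => - alpha j) k.

(* P_m(z; {alpha_j}_{j=0}^{m-2}, beta) and Q_m (m >= 1) *)
Definition Ppol (m : nat) (alpha : nat -> C) (beta : C) : {poly C} :=
  'X * Phi alpha m.-1 - beta^* *: rev_star m.-1 (Phi alpha m.-1).
Definition Qpol (m : nat) (alpha : nat -> C) (beta : C) : {poly C} :=
  'X * Psi alpha m.-1 + beta^* *: rev_star m.-1 (Psi alpha m.-1).

Definition Cpol m alpha beta : {poly C} := 2^-1 *: (Ppol m alpha beta + Qpol m alpha beta).
Definition Spol m alpha beta : {poly C} := 2^-1 *: (Ppol m alpha beta - Qpol m alpha beta).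

End OPUC.

(* Main.v *)
Require Import Defs.
From HB Require Import structures.
From mathcomp Require Import all_boot all_order all_algebra.
From mathcomp Require Import complex.
From mathcomp Require Import ring zify.
Import Order.TTheory GRing.Theory Num.Theory.
Local Open Scope ring_scope.

Section S.
Variable C : numClosedFieldType.

Definition stp (a : C) (w : {poly C} * {poly C}) : {poly C} * {poly C} :=
  ('X * w.1 - (a^*)%:P * w.2, - (a%:P * 'X * w.1) + w.2).

Fixpoint F (al : nat -> C) k w := match k with 0 => w | k'.+1 => stp (al k') (F al k' w) end.

Lemma F_shift al k w : F al k.+1 w = F (fun j => al j.+1) k (stp (al 0%N) w).
Proof. elim: k => [//|k IH] /=. by rewrite -IH. Qed.

Lemma F_lin al k u v : F al k (u, v) =
  (u * (F al k (1,0)).1 + v * (F al k (0,1)).1, u * (F al k (1,0)).2 + v * (F al k (0,1)).2).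
Proof.
elim: k => [|k IH] /=; first by rewrite !mulr1 !mulr0 addr0 add0r.
rewrite IH /stp /=; congr pair; ring.
Qed.

Lemma F_D al k u v : F (fun j => - al j) k (u, - v) = ((F al k (u,v)).1, - (F al k (u,v)).2).
Proof.
elim: k => [//|k IH] /=. rewrite IH /stp /=. rewrite rmorphN /= !polyCN. congr pair; ring.
Qed.

Lemma size_rev k (p : {poly C}) : (size (rev_star k p) <= k.+1)%N.
Proof. exact: size_poly. Qed.

Lemma size_Phi (al : nat -> C) k : (size (Phi al k) <= k.+1)%N.
Proof.
elim: k => [|k IH] /=; first by rewrite size_poly1.
apply: leq_trans (size_polyD _ _) _; rewrite geq_max size_polyN; apply/andP; split.
  apply: leq_trans (size_polyMleq _ _) _; rewrite size_polyX; exact: IH.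
apply: leq_trans (size_scale_leq _ _) _; exact: leq_trans (size_rev _ _) (leqnSn _).
Qed.

Lemma rev_lin k (p q : {poly C}) c : rev_star k (p - c *: q) = rev_star k p - c^* *: rev_star k q.
Proof.
apply/polyP => i; rewrite /rev_star coefB coefZ !coef_poly.
case: ifP => _; last by rewrite mulr0 subr0.
by rewrite coefB coefZ rmorphB rmorphM.
Qed.

Lemma rev_X k (p : {poly C}) : (size p <= k.+1)%N -> rev_star k.+1 ('X * p) = rev_star k p.
Proof.
move=> Hs; apply/polyP => i; rewrite /rev_star !coef_poly coefXM.
case: (ltnP i k.+2) => Hi; case: (ltnP i k.+1) => Hi2 //.
- case: eqP => H; first lia. congr (_^*); congr (p`_ _); lia.
- have -> : i = k.+1 by lia. by rewrite subnn eqxx rmorph0.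
- lia.
Qed.

Lemma rev_rev k (p : {poly C}) : (size p <= k.+1)%N -> rev_star k.+1 (rev_star k p) = 'X * p.
Proof.
move=> Hs; apply/polyP => i; rewrite /rev_star !coef_poly coefXM.
case: (ltnP i k.+2) => Hi.
- case: eqP => H.
    subst i. rewrite subn0 ltnn rmorph0 //.
  rewrite ifT; last lia. rewrite conjCK; congr (p`_ _); lia.
- case: eqP => H //. rewrite nth_default //. move: Hi H; case: i => [|i] //= Hi _. move: Hs Hi; rewrite ltnS; exact: leq_trans.
Qed.

Lemma Phi_F (al : nat -> C) k : (Phi al k, rev_star k (Phi al k)) = F al k (1,1).
Proof.
elim: k => [|k IH].
  rewrite /=; congr pair; apply/polyP => i; rewrite coef_poly coefC; case: i => [|i] //=.
  by rewrite conjC1 coef1.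
  by rewrite coef1.
rewrite /= -IH /stp /=. rewrite rev_lin rev_X ?size_Phi // rev_rev ?size_Phi // conjCK.
rewrite -!mul_polyC; congr pair; ring.
Qed.

Lemma main_gen (m : nat) (al : nat -> C) (beta : C) :
  Cpol m.+2 al beta =
    'X * (Cpol m.+1 (fun j => al j.+1) beta
          - al 0%N *: Spol m.+1 (fun j => al j.+1) beta)
  /\ Spol m.+2 al beta =
    - (al 0%N)^* *: Cpol m.+1 (fun j => al j.+1) beta
    + Spol m.+1 (fun j => al j.+1) beta.
Proof.
have E (a : nat -> C) k : Phi a k = (F a k (1,1)).1 /\ rev_star k (Phi a k) = (F a k (1,1)).2.
  by rewrite -Phi_F.
have FD (a : nat -> C) k : F (fun j => - a j) k (1,1) = ((F a k (1,-1)).1, -(F a k (1,-1)).2).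
  by have := F_D a k 1 (-1); rewrite opprK.
rewrite /Cpol /Spol /Ppol /Qpol /Psi.
rewrite !(proj2 (E _ _)) !(proj1 (E _ _)) !FD.
rewrite !F_shift /stp /=.
set sa := (fun j => al j.+1).
have H11 : F sa m (1,1) = ((F sa m (1,0)).1 + (F sa m (0,1)).1, (F sa m (1,0)).2 + (F sa m (0,1)).2).
  by rewrite F_lin !mul1r.
have H1m : F sa m (1,-1) = ((F sa m (1,0)).1 - (F sa m (0,1)).1, (F sa m (1,0)).2 - (F sa m (0,1)).2).
  by rewrite F_lin !mul1r !mulN1r.
rewrite H11 H1m.
rewrite [F sa m ('X * 1 - _, _)]F_lin [F sa m ('X * 1 - _, _)]F_lin /=.
rewrite -!mul_polyC ?polyCN.
split; ring.
Qed.

End S.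

Theorem theorem4p2 (R : rcfType) (n : nat) (alpha : nat -> R[i]) (beta : R[i]) :
  (2 <= n)%N ->
  (forall j : nat, (j <= n - 2)%N -> `|alpha j| < 1) ->
  `|beta| = 1 ->
  Cpol n alpha beta =
    'X * (Cpol n.-1 (fun j => alpha j.+1) beta
          - alpha 0%N *: Spol n.-1 (fun j => alpha j.+1) beta)
  /\ Spol n alpha beta =
    - (alpha 0%N)^* *: Cpol n.-1 (fun j => alpha j.+1) beta
    + Spol n.-1 (fun j => alpha j.+1) beta.
Proof.
case: n => [|[|m]] // _ _ _.
exact: main_gen.
Qed.
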